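(* (1) Let $A\in\mathrm{SL}(2,\mathbb R)$ be such that $A\Lambda_q$ contains a horizontal vector $(c,0)^T$ with $0<c\le1$. Then there is a unique point $(a_A,b_A)\in\mathscr T^q$ with $A\Lambda_q=g_{a_A,b_A}\Lambda_q$, and $a_A=c$. (Uniqueness: if $(a,b),(c',d)\in\mathscr T^q$ and $g_{a,b}\Lambda_q=g_{c',d}\Lambda_q$ then $(a,b)=(c',d)$.) (2) For every $(a,b)\in\mathscr T^q$, the set $g_{a,b}\Lambda_q\cap S_1$ is nonempty and contains a vector of smallest positive slope; let $R_q(a,b)>0$ denote this slope. Then $R_q(a,b)$ is the smallest $s>0$ such that $h_sg_{a,b}\Lambda_q$ contains a horizontal vector of length at most $1$, so by (1) there is a unique point $\mathrm{BCZ}_q(a,b)\in\mathscr T^q$ with $h_{R_q(a,b)}g_{a,b}\Lambda_q=g_{\mathrm{BCZ}_q(a,b)}\Lambda_q$. (3) The sets $\mathscr T_i^q=\{(a,b)\in\mathscr T^q:(a,b)^T\cdot\mathfrak w_{i-1}^q>1,\ (a,b)^T\cdot\mathfrak w_i^q\le1\}$, $i=2,3,\dots,q-1$, form a partition of $\mathscr T^q$. If $(a,b)\in\mathscr T_i^q$, then $g_{a,b}\mathfrak w_i^q$ is the vector of least positive slope in $g_{a,b}\Lambda_q\cap S_1$, $$R_q(a,b)=\frac{y_i^q}{a\,\big((a,b)^T\cdot\mathfrak w_i^q\big)},$$ and $$\mathrm{BCZ}_q(a,b)=\Big((a,b)^T\cdot\mathfrak w_i^q,\ (a,b)^T\cdot\mathfrak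 w_{i+1}^q+k_i^q(a,b)\,\lambda_q\,(a,b)^T\cdot\mathfrak w_i^q\Big),\quad k_i^q(a,b)=\left\lfloor\frac{1-(a,b)^T\cdot\mathfrak w_{i+1}^q}{\lambda_q\,(a,b)^T\cdot\mathfrak w_i^q}\right\rfloor.$$
   Context: Fix an integer $q\ge3$, let $\lambda_q=2\cos(\pi/q)$, and let $G_q\subset \mathrm{SL}(2,\mathbb R)$ be the Hecke triangle group generated by $S=\begin{pmatrix}0&-1\\1&0\end{pmatrix}$ and $T_q=\begin{pmatrix}1&\lambda_q\\0&1\end{pmatrix}$, acting linearly on $\mathbb R^2$. Set $\Lambda_q=G_q(1,0)^T$ and $A\Lambda_q=\{A\mathbf v:\mathbf v\in\Lambda_q\}$. Let $U_q=T_qS=\begin{pmatrix}\lambda_q&-1\\1&0\end{pmatrix}$ and $\mathfrak w_i^q=(x_i^q,y_i^q)^T=U_q^i(1,0)^T$. The dot product is the standard one. Matrices: $h_s=\begin{pmatrix}1&0\\-s&1\end{pmatrix}$ ($s\in\mathbb R$), $g_{a,b}=\begin{pmatrix}a&b\\0&a^{-1}\end{pmatrix}$ ($a>0,b\in\mathbb R$); for $(a,b)$ a point, $g_{(a,b)}$ means $g_{a,b}$. For $\tau>0$, $S_\tau=\{(x,y)^T\in\mathbb R^2:0<x\le\tau\}$ is the vertical strip. The slope of $(x,y)^T$ with $x\ne0$ is $y/x$. The $G_q$-Farey triangle is $\mathscr T^q=\{(a,b)\in\mathbb R^2:0<a\le1,\ 1-\lambda_qa<b\le1\}$. *)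

(* Defs.v *)
From Stdlib Require Import Reals Lra Lia ClassicalEpsilon.
Open Scope R_scope.

Record mat := Mat { m11 : R; m12 : R; m21 : R; m22 : R }.
Definition vec := (R * R)%type.

Definition mmul (A B : mat) : mat :=
  Mat (m11 A * m11 B + m12 A * m21 B) (m11 A * m12 B + m12 A * m22 B)
      (m21 A * m11 B + m22 A * m21 B) (m21 A * m12 B + m22 A * m22 B).
Definition mapp (A : mat) (v : vec) : vec :=
  (m11 A * fst v + m12 A * snd v, m21 A * fst v + m22 A * snd v).
Definition det (A : mat) : R := m11 A * m22 A - m12 A * m21 A.
Definition Imat : mat := Mat 1 0 0 1.

Definition lam (q : nat) : R := 2 * cos (PI / INR q).

Definition Smat : mat := Mat 0 (-1) 1 0.
Definition Sinv : mat := Mat 0 1 (-1) 0.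
Definition Tmat (q : nat) : mat := Mat 1 (lam q) 0 1.
Definition Tinv (q : nat) : mat := Mat 1 (- lam q) 0 1.

Inductive inG (q : nat) : mat -> Prop :=
| G_id : inG q Imat
| G_S  : forall M, inG q M -> inG q (mmul Smat M)
| G_Si : forall M, inG q M -> inG q (mmul Sinv M)
| G_T  : forall M, inG q M -> inG q (mmul (Tmat q) M)
| G_Ti : forall M, inG q M -> inG q (mmul (Tinv q) M).

Definition Lam (q : nat) (v : vec) : Prop :=
  exists M, inG q M /\ v = mapp M (1, 0).
Definition ALam (q : nat) (A : mat) (v : vec) : Prop :=
  exists u, Lam q u /\ v = mapp A u.
Definition same_lattice (q : nat) (A B : mat) : Prop :=
  forall v, ALam q A v <-> ALam q B v.

Definition hmat (s : R) : mat := Mat 1 0 (- s) 1.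
Definition gmat (a b : R) : mat := Mat a b 0 (/ a).

Definition Umat (q : nat) : mat := mmul (Tmat q) Smat.
Fixpoint mpow (A : mat) (n : nat) : mat :=
  match n with O => Imat | S n' => mmul A (mpow A n') end.
Definition w (q i : nat) : vec := mapp (mpow (Umat q) i) (1, 0).

Definition dot (u v : vec) : R := fst u * fst v + snd u * snd v.

Definition inT (q : nat) (p : vec) : Prop :=
  0 < fst p <= 1 /\ 1 - lam q * fst p < snd p <= 1.

Definition strip (tau : R) (v : vec) : Prop := 0 < fst v <= tau.
Definition slope (v : vec) : R := snd v / fst v.

Definition is_min_slope (q : nat) (a b r : R) : Prop :=
  exists v, ALam q (gmat a b) v /\ strip 1 v /\ 0 < slope v /\ slope v = r /\
    forall u, ALam q (gmat a b) u -> strip 1 u -> 0 < slope u -> r <= slope u.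

Definition Rq (q : nat) (a b : R) : R :=
  epsilon (inhabits 0) (is_min_slope q a b).
Definition BCZ (q : nat) (a b : R) : vec :=
  epsilon (inhabits (0, 0)) (fun p => inT q p /\
    same_lattice q (mmul (hmat (Rq q a b)) (gmat a b)) (gmat (fst p) (snd p))).

Definition has_short_horizontal (q : nat) (A : mat) : Prop :=
  exists x, 0 < Rabs x <= 1 /\ ALam q A (x, 0).

Definition inTi (q i : nat) (p : vec) : Prop :=
  inT q p /\ dot p (w q (i - 1)) > 1 /\ dot p (w q i) <= 1.

(* Main.v *)
Require Import Defs.
From Stdlib Require Import Reals Lra Lia ClassicalEpsilon.
Open Scope R_scope.


Lemma mat_eq (A B : mat) : m11 A = m11 B -> m12 A = m12 B -> m21 A = m21 B -> m22 A = m22 B -> A = B.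
Proof. destruct A, B; simpl; intros; subst; reflexivity. Qed.

Lemma mmul_assoc A B C : mmul A (mmul B C) = mmul (mmul A B) C.
Proof. destruct A, B, C; unfold mmul; simpl; apply mat_eq; simpl; ring. Qed.

Lemma mmul_I_r A : mmul A Imat = A.
Proof. destruct A; apply mat_eq; unfold mmul; simpl; ring. Qed.

Lemma mapp_mmul A B v : mapp (mmul A B) v = mapp A (mapp B v).
Proof. destruct A, B, v; unfold mapp, mmul; simpl; f_equal; ring. Qed.

Lemma mapp_I v : mapp Imat v = v.
Proof. destruct v; unfold mapp; simpl; f_equal; ring. Qed.

Lemma det_mmul A B : det (mmul A B) = det A * det B.
Proof. destruct A, B; unfold det, mmul; simpl; ring. Qed.

Lemma inG_mul q M N : inG q M -> inG q N -> inG q (mmul M N).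
Proof.
  intros HM HN; induction HM.
  - replace (mmul Imat N) with N; auto.
    destruct N; apply mat_eq; unfold mmul; simpl; ring.
  - rewrite <- mmul_assoc; constructor; auto.
  - rewrite <- mmul_assoc; constructor; auto.
  - rewrite <- mmul_assoc; constructor; auto.
  - rewrite <- mmul_assoc; constructor; auto.
Qed.

Lemma inG_det q M : inG q M -> det M = 1.
Proof.
  induction 1; try (rewrite det_mmul, IHinG; unfold det; simpl; ring).
  unfold det, Imat; simpl; ring.
Qed.

Definition minv (M : mat) : mat := Mat (m22 M) (- m12 M) (- m21 M) (m11 M).

Lemma gen_in q M : inG q (mmul M Imat) -> inG q M.
Proof. rewrite mmul_I_r; auto. Qed.

Lemma inG_S q : inG q Smat. Proof. apply gen_in; constructor; constructor. Qed.
Lemma inG_Si q : inG q Sinv. Proof. apply gen_in; constructor; constructor. Qed.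
Lemma inG_T q : inG q (Tmat q). Proof. apply gen_in; constructor; constructor. Qed.
Lemma inG_Ti q : inG q (Tinv q). Proof. apply gen_in; constructor; constructor. Qed.

Lemma minv_mmul A B : minv (mmul A B) = mmul (minv B) (minv A).
Proof. destruct A, B; apply mat_eq; unfold minv, mmul; simpl; ring. Qed.

Lemma inG_inv q M : inG q M -> inG q (minv M).
Proof.
  induction 1.
  - replace (minv Imat) with Imat. constructor. apply mat_eq; unfold minv, Imat; simpl; ring.
  - rewrite minv_mmul; apply inG_mul; auto.
    replace (minv Smat) with Sinv by (apply mat_eq; unfold minv; simpl; ring). apply inG_Si.
  - rewrite minv_mmul; apply inG_mul; auto.
    replace (minv Sinv) with Smat by (apply mat_eq; unfold minv; simpl; ring). apply inG_S.
  - rewrite minv_mmul; apply inG_mul; auto.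
    replace (minv (Tmat q)) with (Tinv q) by (apply mat_eq; unfold minv; simpl; ring). apply inG_Ti.
  - rewrite minv_mmul; apply inG_mul; auto.
    replace (minv (Tinv q)) with (Tmat q) by (apply mat_eq; unfold minv; simpl; ring). apply inG_T.
Qed.

Lemma mapp_minv M u : det M = 1 -> mapp M (mapp (minv M) u) = u.
Proof. destruct M, u; unfold det, mapp, minv; simpl; intros H.
  f_equal; [transitivity ((m11 * m22 - m12 * m21) * r) | transitivity ((m11 * m22 - m12 * m21) * r0)];
  try ring; rewrite H; ring. Qed.

Lemma Lam_act q M u : inG q M -> Lam q u -> Lam q (mapp M u).
Proof. intros HM [N [HN ->]]. exists (mmul M N); split. apply inG_mul; auto. rewrite mapp_mmul; auto. Qed.

Lemma Lam_base q : Lam q (1, 0).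
Proof. exists Imat; split. constructor. rewrite mapp_I; auto. Qed.

Lemma transfer q X Y M : inG q M -> (forall v, mapp X (mapp M v) = mapp Y v) -> same_lattice q X Y.
Proof.
  intros HM H v; split.
  - intros [u [Hu ->]]. exists (mapp (minv M) u); split.
    apply Lam_act; auto. apply inG_inv; auto.
    rewrite <- H, mapp_minv; auto. apply (inG_det q); auto.
  - intros [u [Hu ->]]. exists (mapp M u); split. apply Lam_act; auto. auto.
Qed.

Lemma same_sym q A B : same_lattice q A B -> same_lattice q B A.
Proof. intros H v; split; apply H. Qed.
Lemma same_trans q A B C : same_lattice q A B -> same_lattice q B C -> same_lattice q A C.
Proof. intros H1 H2 v; split; intro; [apply H2, H1|apply H1, H2]; auto. Qed.

Definition Tz (q : nat) (n : Z) : mat := Mat 1 (IZR n * lam q) 0 1.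

Lemma inG_Tz q n : inG q (Tz q n).
Proof.
  assert (Hp : forall k, inG q (Tz q (Z.of_nat k)) /\ inG q (Tz q (- Z.of_nat k))).
  { induction k.
    - simpl. replace (Tz q 0) with Imat. split; constructor.
      apply mat_eq; unfold Tz; simpl; ring.
    - destruct IHk as [H1 H2]; split.
      + replace (Tz q (Z.of_nat (S k))) with (mmul (Tmat q) (Tz q (Z.of_nat k))).
        constructor; auto. apply mat_eq; unfold Tz, mmul, Tmat, Tinv; cbn [m11 m12 m21 m22]; try ring.
        rewrite Znat.Nat2Z.inj_succ, succ_IZR; ring.
      + replace (Tz q (- Z.of_nat (S k))) with (mmul (Tinv q) (Tz q (- Z.of_nat k))).
        constructor; auto. apply mat_eq; unfold Tz, mmul, Tmat, Tinv; cbn [m11 m12 m21 m22]; try ring.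
        rewrite Znat.Nat2Z.inj_succ, !opp_IZR, succ_IZR; ring. }
  destruct (ZArith_dec.Z_le_gt_dec 0 n).
  - replace n with (Z.of_nat (Z.to_nat n)) by lia. apply Hp.
  - replace n with (- Z.of_nat (Z.to_nat (- n)))%Z by lia. apply Hp.
Qed.


Definition th (q : nat) : R := PI / INR q.
Definition Yr (q : nat) (t : R) : R := sin (t * th q) / sin (th q).
Definition Y (q : nat) (n : nat) : R := Yr q (INR n).

Section Ys.
Variable q : nat.
Hypothesis hq : (3 <= q)%nat.

Lemma INRq : 3 <= INR q.
Proof. replace 3 with (INR 3) by (simpl; ring). apply le_INR; auto. Qed.

Lemma th_pos : 0 < th q.
Proof. unfold th. pose proof INRq. pose proof PI_RGT_0. apply Rdiv_lt_0_compat; lra. Qed.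

Lemma th_le : th q <= PI / 3.
Proof. unfold th. pose proof INRq. pose proof PI_RGT_0.
  apply Rmult_le_compat_l; [lra|]. apply Rinv_le_contravar; lra. Qed.

Lemma qth : INR q * th q = PI.
Proof. unfold th. pose proof INRq. field. lra. Qed.

Lemma sth_pos : 0 < sin (th q).
Proof. pose proof th_pos; pose proof th_le; pose proof PI_RGT_0. apply sin_gt_0; lra. Qed.

Lemma lam_eq : lam q = 2 * cos (th q).
Proof. reflexivity. Qed.

Lemma lam_pos : 0 < lam q.
Proof. rewrite lam_eq. pose proof th_pos; pose proof th_le; pose proof PI_RGT_0.
  assert (0 < cos (th q)) by (apply cos_gt_0; lra). lra. Qed.

Lemma lam_lt2 : lam q < 2.
Proof. rewrite lam_eq. pose proof sth_pos. pose proof (sin2_cos2 (th q)).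
  unfold Rsqr in H0. destruct (Rlt_dec (cos (th q)) 1). lra.
  assert (sin (th q) * sin (th q) > 0) by nra.
  assert (cos (th q) * cos (th q) >= 1) by nra. lra. Qed.

Lemma Y0 : Y q 0 = 0.
Proof. unfold Y, Yr; simpl. rewrite Rmult_0_l, sin_0. unfold Rdiv; ring. Qed.

Lemma Y1 : Y q 1 = 1.
Proof. unfold Y, Yr; simpl. rewrite Rmult_1_l. field. pose proof sth_pos; lra. Qed.

Lemma Yrec n : Y q (S (S n)) = lam q * Y q (S n) - Y q n.
Proof.
  unfold Y, Yr. rewrite !S_INR, lam_eq. pose proof sth_pos. set (t := INR n). set (a := th q).
  replace ((t + 1 + 1) * a) with ((t + 1) * a + a) by ring.
  replace (t * a) with ((t + 1) * a - a) by ring.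
  rewrite sin_plus, sin_minus. field. unfold a; lra.
Qed.

Lemma Yq : Y q q = 0.
Proof. unfold Y, Yr. rewrite qth, sin_PI. unfold Rdiv; ring. Qed.

Lemma Yq1 : Y q (q - 1) = 1.
Proof. unfold Y, Yr. rewrite minus_INR by lia. simpl INR.
  replace ((INR q - 1) * th q) with (PI - th q) by (rewrite <- qth; ring).
  rewrite sin_PI_x. field. pose proof sth_pos; lra. Qed.

Lemma Y_ge0 n : (n <= q)%nat -> 0 <= Y q n.
Proof. intros Hn. unfold Y, Yr, Rdiv. apply Rmult_le_pos; [|left; apply Rinv_0_lt_compat, sth_pos].
  apply sin_ge_0. pose proof (pos_INR n); pose proof th_pos; nra.
  rewrite <- qth. apply Rmult_le_compat_r. pose proof th_pos; lra. apply le_INR; auto. Qed.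

Lemma Y_ge1 n : (1 <= n <= q - 1)%nat -> 1 <= Y q n.
Proof. intros Hn. unfold Y, Yr. pose proof sth_pos. apply (Rmult_le_reg_r (sin (th q))); auto.
  unfold Rdiv; rewrite Rmult_assoc, Rinv_l by lra. rewrite Rmult_1_l, Rmult_1_r.
  assert (H1 : 1 <= INR n) by (replace 1 with (INR 1) by reflexivity; apply le_INR; lia).
  assert (H2 : INR n <= INR q - 1) by (replace (INR q - 1) with (INR (q - 1)) by (rewrite minus_INR by lia; simpl; ring); apply le_INR; lia).
  pose proof th_pos; pose proof th_le; pose proof PI_RGT_0. pose proof qth.
  destruct (Rle_dec (INR n * th q) (PI/2)).
  - apply sin_incr_1; try lra; nra.
  - rewrite <- (sin_PI_x (INR n * th q)). apply sin_incr_1; try lra; nra.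
Qed.

Lemma Y_sub x y : (x + y <= q)%nat -> Y q (x + y) <= Y q x + Y q y.
Proof. intros Hxy. unfold Y, Yr. rewrite plus_INR, Rmult_plus_distr_r, sin_plus.
  pose proof sth_pos. unfold Rdiv. rewrite <- Rmult_plus_distr_r.
  apply Rmult_le_compat_r. left; apply Rinv_0_lt_compat; auto.
  assert (0 <= sin (INR x * th q)). { apply sin_ge_0. pose proof (pos_INR x); pose proof th_pos; nra.
    rewrite <- qth. apply Rmult_le_compat_r. pose proof th_pos; lra. apply le_INR; lia. }
  assert (0 <= sin (INR y * th q)). { apply sin_ge_0. pose proof (pos_INR y); pose proof th_pos; nra.
    rewrite <- qth. apply Rmult_le_compat_r. pose proof th_pos; lra. apply le_INR; lia. }
  pose proof (COS_bound (INR x * th q)); pose proof (COS_bound (INR y * th q)). nra.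
Qed.

Lemma sin_interp t t1 t2 : sin t * sin (t2 - t1) = sin t1 * sin (t2 - t) + sin t2 * sin (t - t1).
Proof. rewrite !sin_minus. ring. Qed.

Lemma Yr_interp t t1 t2 : Yr q t * Yr q (t2 - t1) = Yr q t1 * Yr q (t2 - t) + Yr q t2 * Yr q (t - t1).
Proof. unfold Yr. rewrite !Rmult_minus_distr_r. pose proof sth_pos.
  pose proof (sin_interp (t * th q) (t1 * th q) (t2 * th q)).
  unfold Rdiv. replace (sin (t * th q) * / sin (th q) * (sin (t2 * th q - t1 * th q) * / sin (th q)))
    with ((sin (t * th q) * sin (t2 * th q - t1 * th q)) * (/ sin (th q) * / sin (th q))) by ring.
  rewrite H0. ring. Qed.

Lemma Y_interp c l k m : (l <= k <= m)%nat ->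
  Y q (k + c) * Y q (m - l) = Y q (l + c) * Y q (m - k) + Y q (m + c) * Y q (k - l).
Proof. intros H. unfold Y. rewrite !plus_INR, !minus_INR by lia.
  pose proof (Yr_interp (INR k + INR c) (INR l + INR c) (INR m + INR c)).
  replace (INR m + INR c - (INR l + INR c)) with (INR m - INR l) in H0 by ring.
  replace (INR m + INR c - (INR k + INR c)) with (INR m - INR k) in H0 by ring.
  replace (INR k + INR c - (INR l + INR c)) with (INR k - INR l) in H0 by ring. auto. Qed.


Lemma mpow_U n : mpow (Umat q) (S n) = Mat (Y q (S (S n))) (- Y q (S n)) (Y q (S n)) (- Y q n).
Proof.
  induction n.
  - rewrite Yrec, Y1, Y0. change (mpow (Umat q) 1) with (mmul (Umat q) Imat). rewrite mmul_I_r.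
    apply mat_eq; unfold Umat, mmul, Tmat, Smat; cbn [m11 m12 m21 m22]; ring.
  - change (mpow (Umat q) (S (S n))) with (mmul (Umat q) (mpow (Umat q) (S n))). rewrite IHn.
    rewrite (Yrec (S n)). apply mat_eq; unfold Umat, mmul, Tmat, Smat; cbn [m11 m12 m21 m22]; rewrite ?(Yrec n); ring.
Qed.

Lemma w_eq n : w q n = (Y q (S n), Y q n).
Proof. destruct n.
  - unfold w; simpl mpow. rewrite mapp_I, Y1, Y0; auto.
  - unfold w. rewrite mpow_U. unfold mapp; cbn [m11 m12 m21 m22 fst snd]. f_equal; ring.
Qed.

Lemma mapp_Uq v : mapp (mpow (Umat q) q) v = (- fst v, - snd v).
Proof. replace (mpow (Umat q) q) with (mpow (Umat q) (S (q-1))) by (f_equal; lia).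
  rewrite mpow_U. rewrite Yrec. replace (S (q-1)) with q by lia. rewrite Yq, Yq1.
  destruct v; unfold mapp; cbn [m11 m12 m21 m22 fst snd]. f_equal; ring.
Qed.

End Ys.



Definition vneg (v : vec) : vec := (- fst v, - snd v).

Lemma mapp_vneg M v : mapp M (vneg v) = vneg (mapp M v).
Proof. destruct v; unfold mapp, vneg; simpl; f_equal; ring. Qed.
Lemma vneg_vneg v : vneg (vneg v) = v.
Proof. destruct v; unfold vneg; simpl; f_equal; ring. Qed.

Inductive V2 (q : nat) : vec -> Prop :=
| V2b : forall j, (1 <= j <= q - 2)%nat -> V2 q (- Y q j, Y q (S j))
| V2s : forall u k, V2 q u -> (1 <= k <= q - 1)%nat ->
    V2 q (vneg (mapp Smat (mapp (mpow (Umat q) k) u))).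

Definition P (q : nat) (v : vec) : Prop :=
  exists r u, (r < q)%nat /\ (u = (1, 0) \/ V2 q u) /\
    (v = mapp (mpow (Umat q) r) u \/ v = vneg (mapp (mpow (Umat q) r) u)).

Section Pq.
Variable q : nat.
Hypothesis hq : (3 <= q)%nat.

Lemma mapp_Uk k x y : mapp (mpow (Umat q) (S k)) (x, y) =
  (Y q (S (S k)) * x - Y q (S k) * y, Y q (S k) * x - Y q k * y).
Proof. rewrite mpow_U by auto. unfold mapp; cbn [m11 m12 m21 m22 fst snd]. f_equal; ring. Qed.

Lemma V2_bound u : V2 q u -> fst u <= -1 /\ 1 <= snd u.
Proof.
  induction 1.
  - simpl. pose proof (Y_ge1 q hq j). pose proof (Y_ge1 q hq (S j)). split; [|apply H1; lia]. 
    assert (1 <= Y q j) by (apply H0; lia). lra.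
  - destruct u as [x y]. simpl in IHV2. destruct k as [|k]; [lia|]. rewrite mapp_Uk.
    unfold mapp, vneg, Smat; cbn [m11 m12 m21 m22 fst snd].
    assert (1 <= Y q (S k)) by (apply Y_ge1; auto; lia).
    assert (0 <= Y q k) by (apply Y_ge0; auto; lia).
    assert (0 <= Y q (S (S k))) by (apply Y_ge0; auto; lia).
    destruct IHV2. split; nra.
Qed.

Lemma P_neg v : P q v -> P q (vneg v).
Proof. intros [r [u [Hr [Hu [-> | ->]]]]]; exists r, u; repeat split; auto.
  rewrite vneg_vneg; auto. Qed.

Lemma P_U v : P q v -> P q (mapp (Umat q) v).
Proof.
  intros [r [u [Hr [Hu Hv]]]].
  assert (E : mapp (Umat q) (mapp (mpow (Umat q) r) u) = mapp (mpow (Umat q) (S r)) u).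
  { change (mpow (Umat q) (S r)) with (mmul (Umat q) (mpow (Umat q) r)). rewrite mapp_mmul; auto. }
  destruct (Nat.eq_dec (S r) q) as [Eq|Ne].
  - rewrite Eq, mapp_Uq in E by auto. fold (vneg u) in E.
    exists O, u. change (mpow (Umat q) 0) with Imat. rewrite mapp_I. repeat split; auto; try lia.
    destruct Hv as [-> | ->]; [right|left]; rewrite ?mapp_vneg, E; auto. rewrite vneg_vneg; auto.
  - exists (S r), u; repeat split; auto; try lia.
    destruct Hv as [-> | ->]; [left|right]; rewrite ?mapp_vneg, E; auto.
Qed.

Definition Uinv : mat := Mat 0 1 (-1) (lam q).

Lemma Uinv_U v : mapp Uinv (mapp (Umat q) v) = v.
Proof. destruct v; unfold mapp, Uinv, Umat, mmul, Tmat, Smat; cbn [m11 m12 m21 m22 fst snd]; f_equal; ring. Qed.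

Lemma Uinv_eq v : mapp Uinv v = vneg (mapp (mpow (Umat q) (q - 1)) v).
Proof.
  replace (q - 1)%nat with (S (q - 2)) by lia. rewrite mpow_U by auto.
  replace (S (S (q - 2))) with q by lia. replace (S (q - 2)) with (q - 1)%nat by lia.
  pose proof (Yrec q hq (q - 2)). replace (S (S (q - 2))) with q in H by lia.
  replace (S (q - 2)) with (q - 1)%nat in H by lia. rewrite Yq, Yq1 in H by auto.
  assert (Y q (q - 2) = lam q) by lra. rewrite H0, Yq, Yq1 by auto.
  destruct v; unfold mapp, Uinv, vneg; cbn [m11 m12 m21 m22 fst snd]; f_equal; ring.
Qed.

Lemma P_Uinv v : P q v -> P q (mapp Uinv v).
Proof.
  intros [r [u [Hr [Hu Hv]]]]. destruct r as [|r].
  - change (mpow (Umat q) 0) with Imat in Hv. rewrite mapp_I in Hv.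
    exists (q - 1)%nat, u; repeat split; auto; try lia.
    destruct Hv as [-> | ->]; [right|left]; rewrite ?mapp_vneg, Uinv_eq; auto. rewrite vneg_vneg; auto.
  - change (mpow (Umat q) (S r)) with (mmul (Umat q) (mpow (Umat q) r)) in Hv.
    rewrite mapp_mmul in Hv. exists r, u; repeat split; auto; try lia.
    destruct Hv as [-> | ->]; [left|right]; rewrite ?mapp_vneg, Uinv_U; auto.
Qed.

Lemma SS v : mapp Smat (mapp Smat v) = vneg v.
Proof. destruct v; unfold mapp, Smat, vneg; cbn [m11 m12 m21 m22 fst snd]; f_equal; ring. Qed.

Lemma P_of u r : (r < q)%nat -> (u = (1,0) \/ V2 q u) -> P q (mapp (mpow (Umat q) r) u).
Proof. intros; exists r, u; auto. Qed.

Lemma P_V2 u : V2 q u -> P q u.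
Proof. intros H; exists O, u; change (mpow (Umat q) 0) with Imat; rewrite mapp_I; repeat split; auto; lia. Qed.

Lemma S_V2 u : V2 q u -> P q (mapp Smat u).
Proof.
  induction 1.
  - replace (mapp Smat (- Y q j, Y q (S j))) with (vneg (mapp (mpow (Umat q) j) (1, 0))).
    apply P_neg, P_of; auto; lia.
    fold (w q j). rewrite w_eq by auto. unfold mapp, Smat, vneg; cbn [m11 m12 m21 m22 fst snd]; f_equal; ring.
  - rewrite mapp_vneg, SS, vneg_vneg. apply P_of; auto; lia.
Qed.

Lemma P_S v : P q v -> P q (mapp Smat v).
Proof.
  assert (K : forall r u, (r < q)%nat -> (u = (1,0) \/ V2 q u) -> P q (mapp Smat (mapp (mpow (Umat q) r) u))).
  { intros r u Hr [-> | Hu].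
    - fold (w q r). rewrite w_eq by auto.
      destruct r as [|r].
      + rewrite Y0, Y1 by auto. replace (mapp Smat (1, 0)) with (w q (q - 1)).
        apply P_of; auto; lia.
        rewrite w_eq by auto. replace (S (q - 1)) with q by lia. rewrite Yq, Yq1 by auto.
        unfold mapp, Smat; cbn; f_equal; ring.
      + destruct (Nat.eq_dec (S r) (q - 1)) as [E|E].
        * rewrite E. replace (S (q - 1)) with q by lia. rewrite Yq, Yq1 by auto.
          replace (mapp Smat (0, 1)) with (vneg (mapp (mpow (Umat q) 0) (1, 0))).
          apply P_neg, P_of; auto; lia.
          change (mpow (Umat q) 0) with Imat. rewrite mapp_I. unfold mapp, Smat, vneg; cbn; f_equal; ring.
        * replace (mapp Smat (Y q (S (S r)), Y q (S r))) with (- Y q (S r), Y q (S (S r))).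
          apply P_V2. constructor; lia.
          unfold mapp, Smat; cbn; f_equal; ring.
    - destruct r as [|r].
      + change (mpow (Umat q) 0) with Imat. rewrite mapp_I. apply S_V2; auto.
      + rewrite <- (vneg_vneg (mapp Smat _)). apply P_neg, P_V2. constructor; auto; lia. }
  intros [r [u [Hr [Hu [-> | ->]]]]]; auto. rewrite mapp_vneg; apply P_neg; auto.
Qed.

Lemma P_G M u : inG q M -> P q u -> P q (mapp M u).
Proof.
  intros HM; revert u; induction HM; intros u Hu.
  - rewrite mapp_I; auto.
  - rewrite mapp_mmul; apply P_S; auto.
  - rewrite mapp_mmul. replace (mapp Sinv (mapp M u)) with (vneg (mapp Smat (mapp M u))).
    apply P_neg, P_S; auto. destruct (mapp M u); unfold mapp, Sinv, Smat, vneg; cbn; f_equal; ring.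
  - rewrite mapp_mmul. replace (mapp (Tmat q) (mapp M u)) with (vneg (mapp (Umat q) (mapp Smat (mapp M u)))).
    apply P_neg, P_U, P_S; auto.
    destruct (mapp M u); unfold mapp, Tmat, Umat, mmul, Smat, vneg; cbn; f_equal; ring.
  - rewrite mapp_mmul. replace (mapp (Tinv q) (mapp M u)) with (mapp Smat (mapp Uinv (mapp M u))).
    apply P_S, P_Uinv; auto.
    destruct (mapp M u); unfold mapp, Tinv, Uinv, Smat; cbn; f_equal; ring.
Qed.

Lemma Lam_P v : Lam q v -> P q v.
Proof. intros [M [HM ->]]. apply P_G; auto. exists O, (1, 0). change (mpow (Umat q) 0) with Imat.
  rewrite mapp_I; repeat split; auto; lia. Qed.

Lemma struct v : Lam q v -> exists s, (s = 1 \/ s = -1) /\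
 ((exists r, (r < q)%nat /\ v = (s * Y q (S r), s * Y q r)) \/
  (exists m al be, (m + 2 <= q)%nat /\ 1 <= al /\ 1 <= be /\
     v = (s * (al * Y q (S m) + be * Y q (S (S m))), s * (al * Y q m + be * Y q (S m)))) \/
  (exists x y, x <= -1 /\ 1 <= y /\ v = (s * x, s * y))).
Proof.
  intros H. apply Lam_P in H. destruct H as [r [u [Hr [Hu Hv]]]].
  destruct Hu as [-> | Hu].
  - fold (w q r) in Hv. rewrite w_eq in Hv by auto.
    destruct Hv as [-> | ->]; [exists 1 | exists (-1)]; split; auto; left; exists r; split; auto;
      unfold vneg; simpl; f_equal; ring.
  - destruct u as [x y]. destruct (V2_bound _ Hu) as [Hx Hy]. simpl in Hx, Hy.
    destruct r as [|m].
    + change (mpow (Umat q) 0) with Imat in Hv. rewrite mapp_I in Hv.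
      destruct Hv as [-> | ->]; [exists 1 | exists (-1)]; split; auto; right; right; exists x, y;
        repeat split; auto; unfold vneg; simpl; f_equal; ring.
    + rewrite mapp_Uk in Hv.
      destruct Hv as [-> | ->]; [exists (-1) | exists 1]; split; auto; right; left; exists m, y, (-x);
        repeat split; auto; try lia; try lra; unfold vneg; simpl; f_equal; ring.
Qed.

End Pq.


Section Dq.
Variable q : nat.
Hypothesis hq : (3 <= q)%nat.

Lemma abs_ge1 s z : (s = 1 \/ s = -1) -> 1 <= z -> 1 <= Rabs (s * z).
Proof. intros [-> | ->] Hz; unfold Rabs; destruct Rcase_abs; lra. Qed.

Lemma Ky v : Lam q v -> snd v = 0 \/ 1 <= Rabs (snd v).
Proof.
  intros H. destruct (struct q hq v H) as [s [Hs [[r [Hr ->]] | [[m [al [be [Hm [Ha [Hb ->]]]]]] | [x [y [Hx [Hy ->]]]]]]]]; simpl.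
  - destruct r as [|r]. left; rewrite Y0 by auto; ring.
    right; apply abs_ge1; auto; apply Y_ge1; auto; lia.
  - right; apply abs_ge1; auto.
    assert (0 <= Y q m) by (apply Y_ge0; auto; lia). assert (1 <= Y q (S m)) by (apply Y_ge1; auto; lia). nra.
  - right; apply abs_ge1; auto.
Qed.

Lemma Lam_S v : Lam q v -> Lam q (mapp Smat v).
Proof. intros; apply Lam_act; auto; apply inG_S. Qed.

Lemma Kx v : Lam q v -> fst v = 0 \/ 1 <= Rabs (fst v).
Proof. intros H. apply Lam_S, Ky in H. destruct v; unfold mapp, Smat in H; simpl in *.
  replace (1 * r + 0 * r0) with r in H by ring. auto. Qed.

Lemma Hor x : Lam q (x, 0) -> x = 1 \/ x = -1.
Proof.
  intros H. destruct (struct q hq _ H) as [s [Hs [[r [Hr E]] | [[m [al [be [Hm [Ha [Hb E]]]]]] | [x' [y [Hx [Hy E]]]]]]]];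
    injection E; intros E2 E1.
  - destruct r as [|r].
    + rewrite Y1 in E1 by auto. destruct Hs; subst; [left|right]; ring.
    + assert (1 <= Y q (S r)) by (apply Y_ge1; auto; lia). destruct Hs; subst; lra.
  - assert (0 <= Y q m) by (apply Y_ge0; auto; lia). assert (1 <= Y q (S m)) by (apply Y_ge1; auto; lia).
    destruct Hs; subst; nra.
  - destruct Hs; subst; lra.
Qed.

Lemma Lam_neg v : Lam q v -> Lam q (vneg v).
Proof. intros H. rewrite <- SS. apply Lam_S, Lam_S; auto. Qed.

Lemma uniq_g a b c d : inT q (a, b) -> inT q (c, d) ->
  same_lattice q (gmat a b) (gmat c d) -> (a, b) = (c, d).
Proof.
  intros [[Ha1 Ha2] [Hb1 Hb2]] [[Hc1 Hc2] [Hd1 Hd2]] HS; simpl in *.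
  pose proof (lam_pos q hq) as Hl. pose proof (lam_lt2 q hq) as Hl2.
  assert (E1 : a = c).
  { assert (ALam q (gmat a b) (a, 0)).
    { exists (1, 0); split. apply Lam_base. unfold mapp, gmat; simpl; f_equal; ring. }
    apply HS in H. destruct H as [[u1 u2] [Hu E]]. unfold mapp, gmat in E; simpl in E.
    injection E; intros E2 E3.
    assert (u2 = 0). { assert (/ c <> 0) by (apply Rinv_neq_0_compat; lra).
      apply (Rmult_eq_reg_l (/ c)); auto. lra. }
    subst u2. destruct (Hor u1 Hu); subst u1; nra. }
  subst c.
  assert (ALam q (gmat a b) (b, / a)).
  { exists (0, 1); split. replace (0, 1) with (mapp Smat (1, 0)) by (unfold mapp, Smat; simpl; f_equal; ring).
    apply Lam_S, Lam_base. unfold mapp, gmat; simpl; f_equal; ring. }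
  apply HS in H. destruct H as [[u1 u2] [Hu E]]. unfold mapp, gmat in E; simpl in E.
  injection E; intros E2 E3.
  assert (u2 = 1). { assert (/ a <> 0) by (apply Rinv_neq_0_compat; lra).
    apply (Rmult_eq_reg_l (/ a)); auto. lra. }
  subst u2.
  assert (Hp : Lam q (u1 + lam q, 1)).
  { replace (u1 + lam q, 1) with (mapp (Tmat q) (u1, 1)) by (unfold mapp, Tmat; simpl; f_equal; ring).
    apply Lam_act; auto. apply inG_T. }
  assert (Hm : Lam q (u1 - lam q, 1)).
  { replace (u1 - lam q, 1) with (mapp (Tinv q) (u1, 1)) by (unfold mapp, Tinv; simpl; f_equal; ring).
    apply Lam_act; auto. apply inG_Ti. }
  apply Kx in Hu, Hp, Hm. simpl in *.
  assert (Hbd : - (lam q * a) < b - d < lam q * a) by lra.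
  assert (Hu1 : - lam q < u1 < lam q). { split; nra. }
  assert (u1 = 0).
  { destruct Hu as [Hu|Hu]; auto. exfalso. revert Hu Hp Hm; unfold Rabs; repeat destruct Rcase_abs; intros; lra. }
  subst u1. f_equal. lra.
Qed.

Definition fdot (a b : R) (k : nat) : R := a * Y q (S k) + b * Y q k.

Lemma f_dot a b k : dot (a, b) (w q k) = fdot a b k.
Proof. rewrite w_eq by auto. unfold dot, fdot; simpl; ring. Qed.

Lemma f_interp a b l k m : (l <= k <= m)%nat ->
  fdot a b k * Y q (m - l) = fdot a b l * Y q (m - k) + fdot a b m * Y q (k - l).
Proof. intros H. unfold fdot.
  pose proof (Y_interp q hq 1 l k m H). pose proof (Y_interp q hq 0 l k m H).
  rewrite !Nat.add_1_r in H0. rewrite !Nat.add_0_r in H1.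
  transitivity (a * (Y q (S k) * Y q (m - l)) + b * (Y q k * Y q (m - l))); [ring|]. rewrite H0, H1; ring. Qed.

Lemma f0 a b : fdot a b 0 = a.
Proof. unfold fdot. rewrite Y0, Y1 by auto. ring. Qed.
Lemma f1 a b : fdot a b 1 = a * lam q + b.
Proof. unfold fdot. rewrite Yrec, Y0, Y1 by auto. ring. Qed.
Lemma fq1 a b : fdot a b (q - 1) = b.
Proof. unfold fdot. replace (S (q - 1)) with q by lia. rewrite Yq, Yq1 by auto. ring. Qed.
Lemma frec a b n : fdot a b (S (S n)) = lam q * fdot a b (S n) - fdot a b n.
Proof. unfold fdot. rewrite (Yrec q hq (S n)), (Yrec q hq n). ring. Qed.

Lemma F1a a b i k : inT q (a, b) -> (2 <= i <= q - 1)%nat -> fdot a b (i - 1) > 1 ->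
  (1 <= k <= i - 1)%nat -> fdot a b k > 1.
Proof.
  intros [[Ha1 Ha2] [Hb1 Hb2]] Hi Hf Hk; simpl in *.
  assert (F1 : fdot a b 1 > 1) by (rewrite f1; lra).
  destruct (Nat.eq_dec i 2) as [->|Hi2]. replace k with 1%nat by lia. auto.
  pose proof (f_interp a b 1 k (i - 1) Hk).
  assert (1 <= Y q (i - 1 - 1)) by (apply Y_ge1; auto; lia).
  assert (0 <= Y q (i - 1 - k)) by (apply Y_ge0; auto; lia).
  assert (0 <= Y q (k - 1)) by (apply Y_ge0; auto; lia).
  pose proof (Y_sub q hq (i - 1 - k) (k - 1)).
  replace (i - 1 - k + (k - 1))%nat with (i - 1 - 1)%nat in H3 by lia.
  assert (H4 : Y q (i - 1 - 1) <= Y q (i - 1 - k) + Y q (k - 1)) by (apply H3; lia).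
  clear H3.
  set (A := Y q (i - 1 - k)) in *. set (B := Y q (k - 1)) in *. set (C := Y q (i - 1 - 1)) in *.
  assert (fdot a b 1 * A + fdot a b (i - 1) * B > A + B).
  { destruct (Rlt_dec 0 A); [nra|]. assert (A = 0) by lra. subst A. nra. }
  nra.
Qed.

Lemma F1b a b i : inT q (a, b) -> (2 <= i <= q - 1)%nat -> fdot a b (i - 1) > 1 -> fdot a b i > 0.
Proof.
  intros [[Ha1 Ha2] [Hb1 Hb2]] Hi Hf; simpl in *.
  pose proof (f_interp a b 0 (i - 1) i ltac:(lia)).
  rewrite f0 in H. replace (i - 0)%nat with i in H by lia. replace (i - (i - 1))%nat with 1%nat in H by lia.
  replace (i - 1 - 0)%nat with (i - 1)%nat in H by lia. rewrite Y1 in H by auto.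
  assert (1 <= Y q i) by (apply Y_ge1; auto; lia).
  assert (1 <= Y q (i - 1)) by (apply Y_ge1; auto; lia). nra.
Qed.

Lemma phi_nn a b i r : inT q (a, b) -> (i <= r <= q)%nat ->
  Y q i * fdot a b r <= Y q r * fdot a b i.
Proof.
  intros [[Ha1 Ha2] [Hb1 Hb2]] Hr; simpl in *.
  pose proof (f_interp a b 0 i r ltac:(lia)). rewrite f0 in H.
  replace (r - 0)%nat with r in H by lia. replace (i - 0)%nat with i in H by lia.
  assert (0 <= Y q (r - i)) by (apply Y_ge0; auto; lia). nra.
Qed.

Lemma minslope a b i u : inT q (a, b) -> (2 <= i <= q - 1)%nat -> fdot a b (i - 1) > 1 -> fdot a b i <= 1 ->
  Lam q u -> 0 < snd u -> 0 < dot (a, b) u -> dot (a, b) u <= 1 ->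
  Y q i * dot (a, b) u <= snd u * fdot a b i.
Proof.
  intros HT Hi Hf Hfi Hu Hs Hd1 Hd2.
  pose proof (F1b a b i HT Hi Hf) as Hpos.
  pose proof HT as [[Ha1 Ha2] [Hb1 Hb2]]; simpl in *.
  destruct (struct q hq u Hu) as [s [Hss [[r [Hr ->]] | [[m [al [be [Hm [Hal [Hbe ->]]]]]] | [x [y [Hx [Hy ->]]]]]]]];
    unfold dot in *; simpl in *.
  - assert (0 <= Y q r) by (apply Y_ge0; auto; lia).
    assert (s = 1) by (destruct Hss; auto; subst; lra). subst s.
    destruct r as [|r]. rewrite Y0 in Hs by auto; lra.
    replace (a * (1 * Y q (S (S r))) + b * (1 * Y q (S r))) with (fdot a b (S r)) in * by (unfold fdot; ring).
    destruct (Compare_dec.le_lt_dec i (S r)).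
    + pose proof (phi_nn a b i (S r) HT ltac:(lia)). lra.
    + pose proof (F1a a b i (S r) HT Hi Hf ltac:(lia)). lra.
  - assert (0 <= Y q m) by (apply Y_ge0; auto; lia). assert (1 <= Y q (S m)) by (apply Y_ge1; auto; lia).
    assert (s = 1) by (destruct Hss; auto; subst; nra). subst s.
    replace (a * (1 * (al * Y q (S m) + be * Y q (S (S m)))) + b * (1 * (al * Y q m + be * Y q (S m))))
      with (al * fdot a b m + be * fdot a b (S m)) in * by (unfold fdot; ring).
    destruct (Compare_dec.le_lt_dec i m).
    + pose proof (phi_nn a b i m HT ltac:(lia)). pose proof (phi_nn a b i (S m) HT ltac:(lia)).
      replace (1 * (al * Y q m + be * Y q (S m))) with (al * Y q m + be * Y q (S m)) by ring. nra.
    + exfalso. assert (HfS : fdot a b (S m) > 0).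
      { destruct (Nat.eq_dec (S m) i) as [E|E]. rewrite E; lra.
        pose proof (F1a a b i (S m) HT Hi Hf ltac:(lia)); lra. }
      destruct m as [|m].
      * rewrite f0 in Hd2. assert (fdot a b 1 > 1) by (rewrite f1; lra). nra.
      * pose proof (F1a a b i (S m) HT Hi Hf ltac:(lia)). nra.
  - assert (s = 1) by (destruct Hss; auto; subst; lra). subst s.
    unfold fdot. assert (0 <= Y q (S i)) by (apply Y_ge0; auto; lia).
    assert (0 <= Y q i) by (apply Y_ge0; auto; lia).
    assert (0 <= a * Y q (S i)) by nra. assert (0 <= Y q i * a) by nra.
    assert (0 <= y * (a * Y q (S i))) by nra. assert (0 <= Y q i * a * (- x)) by nra. nra.
Qed.

End Dq.


Section Eq.
Variable q : nat.
Hypothesis hq : (3 <= q)%nat.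

Lemma inG_U : inG q (Umat q).
Proof. apply inG_mul; [apply inG_T | apply inG_S]. Qed.

Lemma inG_mpowU n : inG q (mpow (Umat q) n).
Proof. induction n. constructor. apply inG_mul; auto; apply inG_U. Qed.

Lemma Lam_w n : Lam q (w q n).
Proof. exists (mpow (Umat q) n); split; auto; apply inG_mpowU. Qed.

Lemma frac_le p x r y : 0 < x -> 0 < y -> p * y <= r * x -> p / x <= r / y.
Proof. intros Hx Hy H.
  replace (p / x) with ((p * y) * / (x * y)) by (field; lra).
  replace (r / y) with ((r * x) * / (x * y)) by (field; lra).
  apply Rmult_le_compat_r; auto. left; apply Rinv_0_lt_compat; nra. Qed.

Lemma Int_bounds r : IZR (Int_part r) <= r /\ r - 1 < IZR (Int_part r).
Proof. destruct (base_Int_part r); lra. Qed.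

Lemma choose_d c e : 0 < c -> let k := Int_part ((1 - e) / (lam q * c)) in
  1 - lam q * c < e + IZR k * lam q * c <= 1.
Proof.
  intros Hc k. pose proof (lam_pos q hq). assert (0 < lam q * c) by nra.
  destruct (Int_bounds ((1 - e) / (lam q * c))) as [H1 H2]. fold k in H1, H2.
  assert (E : (1 - e) / (lam q * c) * (lam q * c) = 1 - e) by (field; lra).
  assert (IZR k * (lam q * c) <= (1 - e) / (lam q * c) * (lam q * c)) by (apply Rmult_le_compat_r; lra).
  assert (((1 - e) / (lam q * c) - 1) * (lam q * c) < IZR k * (lam q * c)) by (apply Rmult_lt_compat_r; lra).
  split; nra.
Qed.

Lemma exist1 A c : det A = 1 -> 0 < c <= 1 -> ALam q A (c, 0) ->
  exists p : vec, inT q p /\ same_lattice q A (gmat (fst p) (snd p)) /\ fst p = c.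
Proof.
  intros HA Hc [u [[M [HM ->]] E]].
  rewrite <- mapp_mmul in E. set (B := mmul A M) in *.
  assert (HB : det B = 1) by (unfold B; rewrite det_mmul, HA, (inG_det q M HM); ring).
  unfold mapp in E. pose proof (f_equal fst E) as E1. pose proof (f_equal snd E) as E2. cbn [fst snd] in E1, E2.
  assert (H21 : m21 B = 0) by lra. assert (H11 : m11 B = c) by lra.
  assert (H22 : m22 B = / c). { unfold det in HB. rewrite H21, H11 in HB. field_simplify_eq; lra. }
  set (e := m12 B). set (k := Int_part ((1 - e) / (lam q * c))).
  pose proof (choose_d c e ltac:(lra)) as Hd. simpl in Hd. fold k in Hd.
  exists (c, e + IZR k * lam q * c); simpl; split; [|split]; auto.
  - unfold inT; simpl; lra.
  - apply (transfer q A _ (mmul M (Tz q k))). apply inG_mul; auto; apply inG_Tz.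
    intros [x y]. rewrite <- mapp_mmul, mmul_assoc. fold B.
    unfold mapp, Tz, gmat, mmul; cbn [m11 m12 m21 m22 fst snd]. rewrite H21, H11, H22. fold e. f_equal; ring.
Qed.

Lemma part1 A c : det A = 1 -> 0 < c <= 1 -> ALam q A (c, 0) ->
     exists p : vec, inT q p /\ same_lattice q A (gmat (fst p) (snd p)) /\
       fst p = c /\
       (forall p' : vec, inT q p' -> same_lattice q A (gmat (fst p') (snd p')) -> p' = p).
Proof.
  intros HA Hc H. destruct (exist1 A c HA Hc H) as [p [Hp [Hs Hf]]].
  exists p; split; [auto|split; [auto|split; [auto|]]]. intros [c' d'] Hp' Hs'.
  destruct p as [a b]. simpl in *. symmetry. apply (uniq_g q hq); auto.
  apply same_trans with A; auto. apply same_sym; auto.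
Qed.

Lemma part_ex a b : inT q (a, b) -> exists i : nat, (2 <= i <= q - 1)%nat /\ inTi q i (a, b).
Proof.
  intros HT. pose proof HT as [[Ha1 Ha2] [Hb1 Hb2]]; simpl in *.
  assert (F1 : fdot q a b 1 > 1) by (rewrite f1 by auto; lra).
  assert (aux : forall n, (1 <= n <= q - 1)%nat -> fdot q a b n <= 1 ->
     exists i, (2 <= i <= n)%nat /\ fdot q a b (i - 1) > 1 /\ fdot q a b i <= 1).
  { induction n; intros Hn Hfn. lia.
    destruct (Nat.eq_dec n 0) as [->|Hn0]. lra.
    destruct (Rlt_dec 1 (fdot q a b n)).
    - exists (S n); repeat split; try lia. replace (S n - 1)%nat with n by lia. lra. auto.
    - destruct (IHn ltac:(lia) ltac:(lra)) as [i [Hi Hi2]]. exists i; split; auto; lia. }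
  destruct (aux (q - 1)%nat ltac:(lia)) as [i [Hi [Hi1 Hi2]]].
  rewrite fq1 by auto; lra.
  exists i; split; [lia|]. unfold inTi; rewrite !f_dot by auto; auto.
Qed.

Lemma part_un i j a b : (2 <= i <= q - 1)%nat -> (2 <= j <= q - 1)%nat ->
     inTi q i (a, b) -> inTi q j (a, b) -> i = j.
Proof.
  intros Hi Hj [HT [Hi1 Hi2]] [_ [Hj1 Hj2]]. rewrite f_dot in * by auto.
  destruct (Nat.lt_total i j) as [L|[L|L]]; auto; exfalso.
  - pose proof (F1a q hq a b j i HT Hj Hj1 ltac:(lia)). lra.
  - pose proof (F1a q hq a b i j HT Hi Hi1 ltac:(lia)). lra.
Qed.

Lemma is_min_uniq a b r1 r2 : is_min_slope q a b r1 -> is_min_slope q a b r2 -> r1 = r2.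
Proof.
  intros [v1 [H1 [H2 [H3 [H4 H5]]]]] [v2 [G1 [G2 [G3 [G4 G5]]]]].
  pose proof (H5 v2 G1 G2 G3). pose proof (G5 v1 H1 H2 H3). lra.
Qed.

Section Fixed.
Variables (a b : R) (i : nat).
Hypothesis Hi : (2 <= i <= q - 1)%nat.
Hypothesis HTi : inTi q i (a, b).

Lemma HT : inT q (a, b). Proof. apply HTi. Qed.
Lemma Hf1 : fdot q a b (i - 1) > 1. Proof. pose proof HTi as [_ [H _]]. rewrite f_dot in H by auto. auto. Qed.
Lemma Hf2 : fdot q a b i <= 1. Proof. pose proof HTi as [_ [_ H]]. rewrite f_dot in H by auto. auto. Qed.
Lemma Hfpos : 0 < fdot q a b i. Proof. pose proof (F1b q hq a b i HT Hi Hf1). lra. Qed.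
Lemma Ha : 0 < a. Proof. destruct HT as [[H _] _]; auto. Qed.
Lemma HYi : 1 <= Y q i. Proof. apply Y_ge1; auto; lia. Qed.

Lemma v_eq : mapp (gmat a b) (w q i) = (fdot q a b i, / a * Y q i).
Proof. rewrite w_eq by auto. unfold mapp, gmat, fdot; simpl; f_equal; ring. Qed.

Lemma min_part : let v := mapp (gmat a b) (w q i) in
     (ALam q (gmat a b) v /\ strip 1 v /\ 0 < slope v /\
      (forall u, ALam q (gmat a b) u -> strip 1 u -> 0 < slope u -> slope v <= slope u)).
Proof.
  intro v. pose proof Hfpos. pose proof Hf2. pose proof Ha. pose proof HYi.
  assert (Ev : v = (fdot q a b i, / a * Y q i)) by apply v_eq. clearbody v. subst v.
  split; [|split; [|split]].
  - exists (w q i); split. apply Lam_w. symmetry; apply v_eq.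
  - unfold strip; simpl; lra.
  - unfold slope; simpl. unfold Rdiv. apply Rmult_lt_0_compat. apply Rmult_lt_0_compat.
    apply Rinv_0_lt_compat; auto. lra. apply Rinv_0_lt_compat; auto.
  - intros u [[u1 u2] [Hu ->]] Hs Hsl. unfold strip, slope, mapp, gmat in *; simpl in *.
    assert (Hd : dot (a, b) (u1, u2) = a * u1 + b * u2) by (unfold dot; simpl; ring).
    assert (Hd' : 0 < a * u1 + b * u2 + 0 * u2) by lra.
    assert (Hu2 : 0 < u2).
    { assert (0 < (0 * u1 + / a * u2)) .
      { replace (0 * u1 + / a * u2) with ((0 * u1 + / a * u2) / (a * u1 + b * u2) * (a * u1 + b * u2))
          by (field; lra). apply Rmult_lt_0_compat; lra. }
      assert (0 < / a) by (apply Rinv_0_lt_compat; auto).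
      destruct (Rlt_dec 0 u2); auto. nra. }
    pose proof (minslope q hq a b i (u1, u2) HT Hi Hf1 Hf2 Hu ltac:(simpl; lra) ltac:(rewrite Hd; lra) ltac:(rewrite Hd; lra)).
    rewrite Hd in H3; simpl in H3.
    apply frac_le; try lra. assert (0 < / a) by (apply Rinv_0_lt_compat; auto).
    replace (0 * u1 + / a * u2) with (/ a * u2) by ring. nra.
Qed.

Definition r0 := Y q i / (a * fdot q a b i).

Lemma min_r0 : is_min_slope q a b r0.
Proof.
  destruct min_part as [H1 [H2 [H3 H4]]].
  assert (Hsl : slope (mapp (gmat a b) (w q i)) = r0).
  { rewrite v_eq. unfold slope, r0; simpl. pose proof Hfpos; pose proof Ha. field; split; lra. }
  rewrite Hsl in H3, H4.
  exists (mapp (gmat a b) (w q i)); rewrite Hsl; split; [auto|split; [auto|split; [auto|split; [auto|exact H4]]]].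
Qed.

Lemma Rq_eq : Rq q a b = r0.
Proof.
  apply (is_min_uniq a b). unfold Rq. apply epsilon_spec. exists r0; apply min_r0. apply min_r0.
Qed.

Lemma Rq_min : is_min_slope q a b (Rq q a b).
Proof. rewrite Rq_eq; apply min_r0. Qed.

Let c := fdot q a b i.
Let kk := Int_part ((1 - fdot q a b (S i)) / (lam q * c)).
Let d := fdot q a b (S i) + IZR kk * lam q * c.

Lemma cand_inT : inT q (c, d).
Proof.
  pose proof Hfpos; pose proof Hf2. fold c in H, H0.
  pose proof (choose_d c (fdot q a b (S i)) H) as Hd. simpl in Hd. fold kk in Hd. fold d in Hd.
  unfold inT; simpl; lra.
Qed.

Lemma cand_same : same_lattice q (mmul (hmat (Rq q a b)) (gmat a b)) (gmat c d).
Proof.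
  pose proof Hfpos as Hc. pose proof Ha as Ha'. fold c in Hc. rewrite Rq_eq.
  assert (Ei : i = S (i - 1)) by lia. set (i' := (i - 1)%nat) in Ei. clearbody i'.
  apply (transfer q _ _ (mmul (mpow (Umat q) (S i')) (Tz q (kk + 1)))).
  apply inG_mul. apply inG_mpowU. apply inG_Tz.
  intros [x y]. rewrite mapp_mmul, mapp_mmul.
  assert (HD : Y q (S i') * Y q (S i') - Y q (S (S i')) * Y q i' = 1).
  { pose proof (inG_det q _ (inG_mpowU (S i'))). rewrite mpow_U in H by auto.
    unfold det in H; simpl in H. lra. }
  assert (Hcdef : c = a * Y q (S (S i')) + b * Y q (S i')) by (unfold c, fdot; rewrite Ei; auto).
  assert (Hf' : fdot q a b i' = a * Y q (S i') + b * Y q i') by (unfold fdot; auto).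
  assert (Hfs : fdot q a b (S (S i')) = lam q * c - fdot q a b i').
  { assert (c = fdot q a b (S i')) by (unfold c; rewrite Ei; auto). rewrite H; apply frec; auto. }
  assert (H1 : r0 * c = Y q i / a) by (unfold r0; fold c; field; lra). rewrite Ei in H1.
  assert (H2 : r0 * fdot q a b i' - Y q i' / a = / c).
  { unfold r0. fold c. rewrite Ei. 
    assert (Y q (S i') * fdot q a b i' - Y q i' * c = a).
    { rewrite Hf', Hcdef. transitivity (a * (Y q (S i') * Y q (S i') - Y q (S (S i')) * Y q i')); [ring|].
      rewrite HD; ring. }
    field_simplify_eq; try lra; try nra. }
  unfold d. rewrite Ei, Hfs.
  set (x' := x + IZR (kk + 1) * lam q * y).
  assert (Ex : mapp (Tz q (kk + 1)) (x, y) = (x', y)) by (unfold mapp, Tz, x'; simpl; f_equal; ring).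
  rewrite Ex, mapp_Uk by auto.
  unfold mapp, hmat, gmat; cbn [m11 m12 m21 m22 fst snd].
  assert (Ea : a * (Y q (S (S i')) * x' - Y q (S i') * y) + b * (Y q (S i') * x' - Y q i' * y)
     = c * x' - fdot q a b i' * y) by (rewrite Hcdef, Hf'; ring).
  f_equal.
  - replace (1 * (a * (Y q (S (S i')) * x' - Y q (S i') * y) + b * (Y q (S i') * x' - Y q i' * y)) +
      0 * (0 * (Y q (S (S i')) * x' - Y q (S i') * y) + / a * (Y q (S i') * x' - Y q i' * y)))
      with (c * x' - fdot q a b i' * y) by (rewrite <- Ea; ring).
    unfold x'. rewrite plus_IZR. ring.
  - transitivity (- r0 * (c * x' - fdot q a b i' * y) + / a * (Y q (S i') * x' - Y q i' * y)).
    rewrite <- Ea; ring.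
    transitivity (x' * (Y q (S i') / a - r0 * c) + y * (r0 * fdot q a b i' - Y q i' / a)).
    unfold Rdiv; ring. rewrite H1, H2. unfold Rdiv; ring.
Qed.

Lemma BCZ_spec : inT q (BCZ q a b) /\
     same_lattice q (mmul (hmat (Rq q a b)) (gmat a b)) (gmat (fst (BCZ q a b)) (snd (BCZ q a b))).
Proof.
  unfold BCZ. apply epsilon_spec. exists (c, d). split. apply cand_inT. apply cand_same.
Qed.

Lemma BCZ_eq : BCZ q a b = (c, d).
Proof.
  destruct BCZ_spec as [H1 H2]. destruct (BCZ q a b) as [x y]. simpl in *.
  apply (uniq_g q hq); auto. apply cand_inT.
  apply same_trans with (mmul (hmat (Rq q a b)) (gmat a b)). apply same_sym; auto. apply cand_same.
Qed.

Lemma part3 : let v := mapp (gmat a b) (w q i) in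
     (ALam q (gmat a b) v /\ strip 1 v /\ 0 < slope v /\
      (forall u, ALam q (gmat a b) u -> strip 1 u -> 0 < slope u -> slope v <= slope u)) /\
     Rq q a b = snd (w q i) / (a * dot (a, b) (w q i)) /\
     BCZ q a b =
       (dot (a, b) (w q i),
        dot (a, b) (w q (i + 1)) +
        IZR (Int_part ((1 - dot (a, b) (w q (i + 1))) / (lam q * dot (a, b) (w q i))))
          * lam q * dot (a, b) (w q i)).
Proof.
  split; [apply min_part|split].
  - rewrite Rq_eq. unfold r0. rewrite f_dot, w_eq by auto. auto.
  - rewrite BCZ_eq. rewrite !f_dot by auto. rewrite Nat.add_1_r. auto.
Qed.

Lemma part2 : 
     (exists v, ALam q (gmat a b) v /\ strip 1 v) /\
     is_min_slope q a b (Rq q a b) /\ 0 < Rq q a b /\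
     has_short_horizontal q (mmul (hmat (Rq q a b)) (gmat a b)) /\
     (forall s, 0 < s < Rq q a b -> ~ has_short_horizontal q (mmul (hmat s) (gmat a b))) /\
     inT q (BCZ q a b) /\
     same_lattice q (mmul (hmat (Rq q a b)) (gmat a b))
       (gmat (fst (BCZ q a b)) (snd (BCZ q a b))).
Proof.
  destruct min_part as [M1 [M2 [M3 M4]]].
  pose proof Hfpos. pose proof Hf2. pose proof Ha. pose proof HYi.
  assert (HR : 0 < Rq q a b).
  { rewrite Rq_eq; unfold r0. apply Rdiv_lt_0_compat; nra. }
  split; [exists (mapp (gmat a b) (w q i)); auto|].
  split; [apply Rq_min|]. split; auto. split; [|split; [|apply BCZ_spec]].
  - exists (fdot q a b i). split. rewrite Rabs_right; lra.
    exists (w q i); split. apply Lam_w. rewrite mapp_mmul, v_eq. rewrite Rq_eq.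
    unfold mapp, hmat, r0; simpl. f_equal. ring. field. lra.
  - intros s Hs [x [Hx [u [Hu E]]]]. rewrite mapp_mmul in E.
    destruct Rq_min as [_ [_ [_ [_ [_ Hmin]]]]].
    destruct (mapp (gmat a b) u) as [X Y'] eqn:EX. unfold mapp, hmat in E; simpl in E.
    injection E; intros E2 E1.
    assert (Hx0 : x <> 0) by (intro Hz; rewrite Hz, Rabs_R0 in Hx; lra).
    destruct (Rlt_dec 0 x).
    + assert (Rq q a b <= slope (X, Y')).
      { apply Hmin. exists u; auto. unfold strip; simpl. rewrite Rabs_right in Hx; lra.
        unfold slope; simpl. replace Y' with (s * X) by lra. replace (s * X / X) with s by (field; lra). lra. }
      unfold slope in H3; simpl in H3. replace Y' with (s * X) in H3 by lra.
      replace (s * X / X) with s in H3 by (field; lra). lra.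
    + assert (Rq q a b <= slope (vneg (X, Y'))).
      { apply Hmin. exists (vneg u); split. apply Lam_neg; auto. rewrite mapp_vneg, EX; auto.
        unfold strip, vneg; simpl. rewrite Rabs_left in Hx; lra.
        unfold slope, vneg; simpl. replace Y' with (s * X) by lra. replace (- (s * X) / - X) with s by (field; lra). lra. }
      unfold slope, vneg in H3; simpl in H3. replace Y' with (s * X) in H3 by lra.
      replace (- (s * X) / - X) with s in H3 by (field; lra). lra.
Qed.

End Fixed.
End Eq.


Theorem mainTheorem5 (q : nat) (hq : (3 <= q)%nat) :
  (* (1) existence with a_A = c, and uniqueness *)
  (forall (A : mat) (c : R), det A = 1 -> 0 < c <= 1 -> ALam q A (c, 0) ->
     exists p : vec, inT q p /\ same_lattice q A (gmat (fst p) (snd p)) /\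
       fst p = c /\
       (forall p' : vec, inT q p' -> same_lattice q A (gmat (fst p') (snd p')) -> p' = p)) /\
  (forall a b c d : R, inT q (a, b) -> inT q (c, d) ->
     same_lattice q (gmat a b) (gmat c d) -> (a, b) = (c, d)) /\
  (* (2) *)
  (forall a b : R, inT q (a, b) ->
     (exists v, ALam q (gmat a b) v /\ strip 1 v) /\
     is_min_slope q a b (Rq q a b) /\ 0 < Rq q a b /\
     has_short_horizontal q (mmul (hmat (Rq q a b)) (gmat a b)) /\
     (forall s, 0 < s < Rq q a b -> ~ has_short_horizontal q (mmul (hmat s) (gmat a b))) /\
     inT q (BCZ q a b) /\
     same_lattice q (mmul (hmat (Rq q a b)) (gmat a b))
       (gmat (fst (BCZ q a b)) (snd (BCZ q a b)))) /\
  (* (3) partition *)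
  (forall a b : R, inT q (a, b) ->
     exists i : nat, (2 <= i <= q - 1)%nat /\ inTi q i (a, b)) /\
  (forall (i j : nat) (a b : R), (2 <= i <= q - 1)%nat -> (2 <= j <= q - 1)%nat ->
     inTi q i (a, b) -> inTi q j (a, b) -> i = j) /\
  (* (3) formulas *)
  (forall (i : nat) (a b : R), (2 <= i <= q - 1)%nat -> inTi q i (a, b) ->
     let v := mapp (gmat a b) (w q i) in
     (ALam q (gmat a b) v /\ strip 1 v /\ 0 < slope v /\
      (forall u, ALam q (gmat a b) u -> strip 1 u -> 0 < slope u -> slope v <= slope u)) /\
     Rq q a b = snd (w q i) / (a * dot (a, b) (w q i)) /\
     BCZ q a b =
       (dot (a, b) (w q i),
        dot (a, b) (w q (i + 1)) +
        IZR (Int_part ((1 - dot (a, b) (w q (i + 1))) / (lam q * dot (a, b) (w q i))))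
          * lam q * dot (a, b) (w q i))).
Proof.
  split; [intros A c; apply (part1 q hq)|].
  split; [intros a b c d; apply (uniq_g q hq)|].
  split; [intros a b HT; destruct (part_ex q hq a b HT) as [i [Hi HTi]]; apply (part2 q hq a b i Hi HTi)|].
  split; [intros a b; apply (part_ex q hq)|].
  split; [intros i j a b; apply (part_un q hq)|].
  intros i a b Hi HTi; apply (part3 q hq a b i Hi HTi).
Qed.
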